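(* For every elliptic modulus $\kappa\in[0,1)$ and every $n\in\mathbb{Z}$, the equation $$(-1)^n\kappa'\big(\mathrm{sc}_\kappa(x)+\mathrm{nc}_\kappa(x)\big)-2\,\mathrm{dc}_\kappa(x)=0$$ has no solution $x$ with $-K(\kappa)<x<K(\kappa)$.
   Context: $\kappa'=\sqrt{1-\kappa^2}$; $\mathrm{sn}_\kappa,\mathrm{cn}_\kappa,\mathrm{dn}_\kappa$ are the Jacobi elliptic functions with modulus $\kappa$, and Glaisher's notation is used: $\mathrm{sc}=\mathrm{sn}/\mathrm{cn}$, $\mathrm{nc}=1/\mathrm{cn}$, $\mathrm{dc}=\mathrm{dn}/\mathrm{cn}$. $K(\kappa)=\int_0^{\pi/2}(1-\kappa^2\sin^2\theta)^{-1/2}d\theta$ is the complete elliptic integral of the first kind. *)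

(* Defs.v *)
From Stdlib Require Import Reals ClassicalEpsilon.
From Coquelicot Require Import Coquelicot.
Open Scope R_scope.

Definition ellF (k phi : R) : R :=
  RInt (fun t => / sqrt (1 - k ^ 2 * (sin t) ^ 2)) 0 phi.

Definition ellK (k : R) : R := ellF k (PI / 2).

Definition kprime (k : R) : R := sqrt (1 - k ^ 2).

(* Jacobi amplitude: am_k(x) is the phi with F(phi, k) = x
   (unique for 0 <= k < 1, as F(., k) is then an increasing bijection R -> R). *)
Definition jam (k x : R) : R :=
  epsilon (inhabits 0) (fun phi => ellF k phi = x).

Definition jsn (k x : R) : R := sin (jam k x).
Definition jcn (k x : R) : R := cos (jam k x).
Definition jdn (k x : R) : R := sqrt (1 - k ^ 2 * (jsn k x) ^ 2).

Definition jsc (k x : R) : R := jsn k x / jcn k x.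
Definition jnc (k x : R) : R := / jcn k x.
Definition jdc (k x : R) : R := jdn k x / jcn k x.

(* Main.v *)
Require Import Defs.
From Stdlib Require Import Reals ZArith Lra ClassicalEpsilon.
From Coquelicot Require Import Coquelicot.
Open Scope R_scope.

Section S.
Variable k : R.
Hypothesis hk : 0 <= k < 1.
Let g := fun t => / sqrt (1 - k ^ 2 * (sin t) ^ 2).

Lemma rad_pos t : 0 < 1 - k ^ 2 * (sin t) ^ 2.
Proof.
  assert (h1 : (sin t)^2 <= 1).
  { pose proof (sin2 t) as H. unfold Rsqr in H. pose proof (cos t * cos t) as _.
    assert (0 <= cos t * cos t) by nra. simpl. nra. }
  assert (k^2 < 1) by (simpl; nra).
  assert (0 <= sin t ^ 2) by (simpl; nra).
  nra.
Qed.

Lemma rad_le1 t : 1 - k ^ 2 * (sin t) ^ 2 <= 1.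
Proof. pose proof (Rle_0_sqr (k * sin t)). unfold Rsqr in *. simpl. nra. Qed.

Lemma g_ge1 t : 1 <= g t.
Proof.
  unfold g. pose proof (rad_pos t). pose proof (rad_le1 t).
  assert (h0 : 0 < sqrt (1 - k ^ 2 * sin t ^ 2)) by (apply sqrt_lt_R0; lra).
  assert (h1 : sqrt (1 - k ^ 2 * sin t ^ 2) <= 1).
  { apply Rle_trans with (sqrt 1); [apply sqrt_le_1_alt; lra | rewrite sqrt_1; lra]. }
  replace 1 with (/ 1) at 1 by apply Rinv_1. apply Rinv_le_contravar; lra.
Qed.

Lemma g_der t : ex_derive g t.
Proof.
  unfold g. pose proof (rad_pos t). auto_derive.
  split; [lra|]. split; [|exact I].
  apply Rgt_not_eq, sqrt_lt_R0; lra.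
Qed.

Lemma g_cont t : continuous g t.
Proof. exact (@ex_derive_continuous R_AbsRing R_NormedModule g t (g_der t)). Qed.

Lemma g_ex a b : ex_RInt g a b.
Proof. apply (@ex_RInt_continuous R_CompleteNormedModule); intros; apply g_cont. Qed.

Lemma F_der t : is_derive (ellF k) t (g t).
Proof.
  apply is_derive_RInt with (a := 0).
  - apply filter_forall. intro b. exact (@RInt_correct R_CompleteNormedModule g 0 b (g_ex 0 b)).
  - apply g_cont.
Qed.

Lemma F_cont : continuity (ellF k).
Proof.
  intro t. apply continuity_pt_filterlim.
  exact (@ex_derive_continuous R_AbsRing R_NormedModule (ellF k) t (ex_intro _ _ (F_der t))).
Qed.

Lemma F_mono a b : a <= b -> b - a <= ellF k b - ellF k a.
Proof.
  intro hab.
  assert (E : ellF k b = ellF k a + RInt g a b).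
  { unfold ellF. fold g. rewrite <- (RInt_Chasles g 0 a b) by apply g_ex. reflexivity. }
  rewrite E.
  assert (RInt (fun _ => 1) a b <= RInt g a b).
  { apply RInt_le; auto. apply ex_RInt_const. apply g_ex. intros; apply g_ge1. }
  rewrite RInt_const in H. unfold scal in H; simpl in H. unfold mult in H; simpl in H. lra.
Qed.

Lemma F_odd a : ellF k (- a) = - ellF k a.
Proof.
  unfold ellF. fold g.
  pose proof (RInt_comp_lin g (-1) 0 0 a) as H.
  replace (-1 * 0 + 0) with 0 in H by ring.
  replace (-1 * a + 0) with (-a) in H by ring.
  rewrite <- H by apply g_ex.
  rewrite <- (@RInt_opp R_CompleteNormedModule) by apply g_ex.
  apply RInt_ext. intros x _. unfold g, scal; simpl; unfold mult, opp; simpl.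
  replace (-1 * x + 0) with (-x) by ring. rewrite sin_neg.
  replace (- sin x * (- sin x * 1)) with (sin x * (sin x * 1)) by ring. ring.
Qed.


Lemma main_aux x : - ellK k < x < ellK k -> 0 < jcn k x.
Proof.
  intros [h1 h2]. unfold ellK in *.
  assert (hK : PI/2 <= ellF k (PI/2)).
  { pose proof (F_mono 0 (PI/2)). pose proof PI_RGT_0.
    unfold ellF at 2 in H. rewrite RInt_point in H. unfold zero in H; simpl in H. lra. }
  assert (hm : ellF k (-(PI/2)) = - ellF k (PI/2)) by apply F_odd.
  assert (ex : exists phi, ellF k phi = x).
  { destruct (IVT_gen (ellF k) (-(PI/2)) (PI/2) x F_cont) as [phi [_ hphi]].
    - rewrite hm. rewrite Rmin_left, Rmax_right; lra.
    - exists phi; exact hphi. }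
  pose proof (epsilon_spec (inhabits 0) (fun phi => ellF k phi = x) ex) as hs.
  unfold jcn, jam. set (phi := epsilon _ _) in *.
  apply cos_gt_0.
  - destruct (Rlt_or_le (-(PI/2)) phi) as [h|h]; auto.
    pose proof (F_mono phi (-(PI/2)) h). lra.
  - destruct (Rlt_or_le phi (PI/2)) as [h|h]; auto.
    pose proof (F_mono (PI/2) phi h). lra.
Qed.
End S.

Lemma powm1_abs (n : Z) : Rabs (powerRZ (-1) n) = 1.
Proof.
  destruct n; simpl.
  - apply Rabs_R1.
  - apply pow_1_abs.
  - rewrite Rabs_inv, pow_1_abs. apply Rinv_1.
Qed.

Theorem mainTheorem12 :
  forall (k : R) (n : Z), 0 <= k < 1 ->
  ~ (exists x : R, - ellK k < x < ellK k /\
      powerRZ (-1) n * kprime k * (jsc k x + jnc k x) - 2 * jdc k x = 0).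
Proof.
  intros k n hk [x [hx heq]].
  pose proof (main_aux k hk x hx) as hc.
  unfold jsc, jnc, jdc, jdn, kprime in heq. unfold jcn in hc, heq.
  fold (jsn k x) in heq. unfold jsn in *.
  set (c := cos (jam k x)) in *. set (s := sin (jam k x)) in *.
  set (p := powerRZ (-1) n) in *.
  assert (hsc : s*s + c*c = 1) by (pose proof (sin2_cos2 (jam k x)) as HH; unfold Rsqr in HH; unfold s, c; lra).
  assert (hs1 : s < 1) by nra. assert (hs2 : -1 < s) by nra.
  assert (hk2 : 0 < 1 - k^2) by (simpl; nra).
  set (kp := sqrt (1 - k^2)) in *.
  set (d := sqrt (1 - k ^ 2 * s ^ 2)) in *.
  assert (hkp : 0 < kp) by (apply sqrt_lt_R0; lra).
  assert (hd : kp <= d) by (apply sqrt_le_1_alt; simpl; nra).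
  assert (E : p * kp * (s + 1) = 2 * d).
  { unfold Rdiv in heq.
    replace (p * kp * (s * / c + / c) - 2 * (d * / c)) with ((p*kp*(s+1) - 2*d) * / c) in heq by ring.
    apply Rmult_integral in heq. destruct heq as [h|h]. lra.
    exfalso; apply (Rinv_neq_0_compat c); lra. }
  pose proof (powm1_abs n) as hp. fold p in hp.
  assert (p <= 1) by (pose proof (Rle_abs p); lra).
  assert (0 < kp * (s+1)) by (apply Rmult_lt_0_compat; lra).
  assert (p * (kp * (s+1)) <= 1 * (kp*(s+1))) by (apply Rmult_le_compat_r; lra).
  assert (kp * (s+1) < kp * 2) by (apply Rmult_lt_compat_l; lra).
  replace (p * kp * (s+1)) with (p * (kp * (s+1))) in E by ring.
  lra.
Qed.
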